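(* Let $T=(V,E)$ be a finite rooted tree, $\Pr$ a probability distribution over a finite set of queries, $u\in V$ and $v\in A(u)$ a proper ancestor of $u$. Then $$\mathbb{E}[I(u,v)]=\mathbb{E}[I(u,\emptyset)]-\mathbb{E}[I(v,\emptyset)].$$
   Context: $T=(V,E)$ is a finite rooted tree; $T(u)$ is the set of nodes of the subtree rooted at $u$; $A(u)$ the set of proper ancestors of $u$. Each non-leaf node is associated with a variable of a finite set $X$; $\mathrm{vars}(u)$ is the set of variables associated with nodes of $T(u)$. Each query $q$ determines $Z_q\subseteq X$. For $R\subseteq V$, $w\in V$: $I_q(w,R)=1$ iff $w\in R$, $\mathrm{vars}(w)\subseteq Z_q$, and no $x\in A(w)\cap R$ has $\mathrm{vars}(x)\subseteq Z_q$; else $0$; $\mathbb{E}[I(w,R)]=\sum_q\Pr(q)I_q(w,R)$. Notation: $\mathbb{E}[I(u,v)]:=\mathbb{E}[I(u,\{u,v\})]$ and $\mathbb{E}[I(w,\emptyset)]:=\mathbb{E}[I(w,\{w\})]$ (the expected usefulness of $w$ when it is the only selected node). *)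

(* Defs.v *)
From HB Require Import structures.
From mathcomp Require Import all_boot all_order all_algebra.
Set Implicit Arguments. Unset Strict Implicit. Unset Printing Implicit Defensive.
Import Order.TTheory GRing.Theory Num.Theory.
Local Open Scope ring_scope.

Section Tree.
Variables (V X Q : finType).
(* A rooted tree on V is given by a parent map: parent x = Some y iff y is the
   parent of x; the root has no parent. *)
Variable parent : V -> option V.

Definition parent_rel : rel V := fun a b => parent a == Some b.

(* T is a finite rooted tree with root r: r has no parent and every node
   reaches r by following parent links (hence acyclic, connected, unique root). *)
Definition is_rooted_tree (r : V) : Prop :=
  parent r = None /\ forall x, connect parent_rel x r.

Definition anc (u : V) : {set V} :=
  [set x | [exists y, (parent u == Some y) && connect parent_rel y x]].

Definition subtree (u : V) : {set V} := [set w | (w == u) || (u \in anc w)].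

Definition nonleaf (w : V) : bool := [exists c, parent c == Some w].

Definition vars (var : V -> X) (u : V) : {set X} :=
  [set var w | w in [set w in subtree u | nonleaf w]].

Definition Iq (var : V -> X) (Zq : {set X}) (w : V) (Rs : {set V}) : bool :=
  [&& w \in Rs, vars var w \subset Zq &
      [forall x in Rs, (x \in anc w) ==> ~~ (vars var x \subset Zq)]].

Definition EI (R : numDomainType) (var : V -> X) (Z : Q -> {set X}) (Pr : Q -> R)
    (w : V) (Rs : {set V}) : R :=
  \sum_(q : Q) Pr q * (Iq var (Z q) w Rs)%:R.
End Tree.

(* Main.v *)
Require Import Defs.
From HB Require Import structures.
From mathcomp Require Import all_boot all_order all_algebra.
Import Order.TTheory GRing.Theory Num.Theory.
Local Open Scope ring_scope.

Lemma step_back (V : finType) (parent : V -> option V) x u :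
  connect (parent_rel parent) x u -> x != u ->
  exists z, parent x = Some z /\ connect (parent_rel parent) z u.
Proof.
move=> /connectP [[|z p] pth ->]; first by rewrite eqxx.
move: pth => /= /andP [/eqP hz pz] _; exists z; split => //.
by apply/connectP; exists p.
Qed.

Arguments step_back {V parent x u}.
Lemma no_self_anc (V : finType) (parent : V -> option V) root u :
  is_rooted_tree parent root -> u \notin anc parent u.
Proof.
move=> [hroot hall]; apply/negP; rewrite inE => /existsP [y /andP [/eqP hy cyu]].
have cl : forall x, connect (parent_rel parent) u x -> connect (parent_rel parent) x u.
  move=> x /connectP [p pth ->]; elim/last_ind: p pth => [|p z IH] /=.
    by rewrite connect0.
  rewrite rcons_path last_rcons => /andP [pp /eqP hz].
  have := IH pp; set w := last u p in hz * => cwu.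
  case: (eqVneq w u) => [ew|new].
    by move: hz; rewrite ew hy => -[<-].
  have [z' [h1 h2]] := step_back cwu new.
  by move: hz; rewrite h1 => -[<-].
have := cl _ (hall u) => cru.
case: (eqVneq root u) => [er|ner].
  by move: hy; rewrite -er hroot.
have [z' [h1 _]] := step_back cru ner.
by rewrite hroot in h1.
Qed.

Arguments no_self_anc {V parent root} u.
Lemma anc_trans (V : finType) (parent : V -> option V) w u v :
  u \in anc parent w -> v \in anc parent u -> v \in anc parent w.
Proof.
rewrite !inE => /existsP [y /andP [hy cyu]] /existsP [y' /andP [hy' cyv]].
apply/existsP; exists y; rewrite hy /=.
apply: connect_trans cyu _; apply: connect_trans cyv.
by apply: connect1; rewrite /parent_rel hy'.
Qed.

Arguments anc_trans {V parent w u v}.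
Theorem lemma5 (V X Q : finType) (R : realFieldType)
    (parent : V -> option V) (root : V) (var : V -> X)
    (Z : Q -> {set X}) (Pr : Q -> R) :
  is_rooted_tree parent root ->
  (forall q, 0 <= Pr q) -> \sum_(q : Q) Pr q = 1 ->
  forall u v : V, v \in anc parent u ->
  EI parent var Z Pr u [set u; v] =
    EI parent var Z Pr u [set u] - EI parent var Z Pr v [set v].
Proof.
move=> tree _ _ u v vu.
have nu := no_self_anc u tree.
have nv := no_self_anc v tree.
have sub : vars parent var u \subset vars parent var v.
  apply/subsetP => x /imsetP [w]; rewrite in_set => /andP [hw nl] ->.
  move: hw; rewrite /subtree in_set => /orP hw.
  apply/imsetP; exists w => //; rewrite in_set nl andbT /subtree in_set.
  case: hw => [/eqP ->|hw]; first by apply/orP; right.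
  by apply/orP; right; apply: (anc_trans hw vu).
rewrite /EI -sumrB; apply: eq_bigr => q _; rewrite -mulrBr; congr (_ * _).
set a := vars parent var u \subset Z q.
set b := vars parent var v \subset Z q.
have ba : b -> a by move=> hb; apply: subset_trans sub hb.
have e1 : Iq parent var (Z q) u [set u; v] = a && ~~ b.
  rewrite /Iq in_set2 eqxx /=; congr (_ && _).
  apply/forallP/idP => [H|nb x]; first by have := H v; rewrite in_set2 eqxx orbT vu.
  rewrite in_set2; apply/implyP => /orP [/eqP ->|/eqP ->]; first by rewrite (negbTE nu).
  by apply/implyP.
have e2 : Iq parent var (Z q) u [set u] = a.
  rewrite /Iq in_set1 eqxx /=; apply/andP/idP => [[]//|ha]; split => //.
  by apply/forallP => x; rewrite in_set1; apply/implyP => /eqP ->; rewrite (negbTE nu).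
have e3 : Iq parent var (Z q) v [set v] = b.
  rewrite /Iq in_set1 eqxx /=; apply/andP/idP => [[]//|ha]; split => //.
  by apply/forallP => x; rewrite in_set1; apply/implyP => /eqP ->; rewrite (negbTE nv).
rewrite e1 e2 e3; clear e1 e2 e3.
move: ba; case: b; case: a => /= h; [by rewrite subrr | by have := h isT | by rewrite subr0 | by rewrite subr0].
Qed.
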